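(* For all integers $i,N,n$ with $0\le i\le N\le n$, $$\sum_{i_1,i_2}\binom{n-i_2}{N-i_2}\binom{n-i_1}{i_2-i}\binom{N-i}{i_1-i}(-1)^{i_1+i_2}=(-1)^{N-i},$$ where the sum is over all integers $i_1,i_2$.
   Context: Convention: the binomial coefficient $\binom{k}{l}$ is defined as the usual binomial coefficient when $k\ge0$, $l\ge0$ and $k\ge l$, and is $0$ otherwise. Because of this convention, the sum above has only finitely many nonzero terms. *)

(* Defs.v *)
From mathcomp Require Import all_boot all_order all_algebra.
Set Implicit Arguments. Unset Strict Implicit. Unset Printing Implicit Defensive.
Import Order.TTheory GRing.Theory Num.Theory.
Local Open Scope ring_scope.

Definition binz (k l : int) : int :=
  if (0 <= l) && (l <= k) then ('C(absz k, absz l))%:Z else 0.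

Definition termz (n N i i1 i2 : int) : int :=
  binz (n - i2) (N - i2) * binz (n - i1) (i2 - i) * binz (N - i) (i1 - i)
  * (-1) ^+ absz (i1 + i2).

Definition boxsum (M : nat) (f : int -> int -> int) : int :=
  \sum_(a < (2 * M).+1) \sum_(b < (2 * M).+1)
     f (a%:Z - M%:Z) (b%:Z - M%:Z).

(* Main.v *)
Require Import Defs.
From mathcomp Require Import all_boot all_order all_algebra.
From mathcomp Require Import zify ring lra.
Import Order.TTheory GRing.Theory Num.Theory.
Local Open Scope ring_scope.

Lemma drop_last (K : nat) (g : nat -> int) : g K = 0 ->
  \sum_(a < K.+1) g a = \sum_(a < K) g a.
Proof. by move=> h; rewrite big_ord_recr /= h addr0. Qed.

Lemma fK (K m b : nat) : (K <= m)%N ->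
  \sum_(a < K.+1) (-1)^+a * ('C(K,a))%:Z * ('C(m-a,b))%:Z
  = if (K <= b)%N then ('C(m-K,b-K))%:Z else 0.
Proof.
elim: K m b => [|K IH] m b hm.
  by rewrite big_ord1 /= expr0 mul1r bin0 mul1r !subn0.
case: m hm => [//|m'] hm.
have hm' : (K <= m')%N by [].
have E : \sum_(a < K.+2) (-1)^+a * ('C(K.+1,a))%:Z * ('C(m'.+1-a,b))%:Z
   = \sum_(a < K.+1) (-1)^+a * ('C(K,a))%:Z * ('C(m'.+1-a,b))%:Z
   - \sum_(a < K.+1) (-1)^+a * ('C(K,a))%:Z * ('C(m'-a,b))%:Z.
  rewrite big_ord_recl /=.
  have -> : \sum_(i < K.+1) (-1) ^+ (bump 0 i) * ('C(K.+1, bump 0 i))%:Z * ('C(m'.+1 - bump 0 i, b))%:Z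
     = \sum_(a < K.+1) (-1)^+a.+1 * ('C(K,a.+1))%:Z * ('C(m'-a,b))%:Z
       - \sum_(a < K.+1) (-1)^+a * ('C(K,a))%:Z * ('C(m'-a,b))%:Z.
    rewrite -sumrN -big_split /=; apply: eq_bigr => a _.
    rewrite /bump /= add1n binS subSS PoszD exprS; ring.
  rewrite [in RHS]big_ord_recl /= !expr0 !bin0 !subn0 !mul1r.
  rewrite (@drop_last _ (fun a : nat => (-1)^+a.+1 * ('C(K,a.+1))%:Z * ('C(m'-a,b))%:Z)); last by rewrite bin_small // mulr0 mul0r.
  by rewrite addrA; congr (_ + _ - _); apply: eq_bigr => a _.
rewrite E !IH //; last by apply: leqW.
case: (ltngtP K b) => hb.
- clear E; case: b hb => // b' hb.
  rewrite subSS (subSn hm') (@subSn K b' hb) binS PoszD; ring.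
- by rewrite subrr.
- by rewrite hb subnn !bin0 subrr.
Qed.

Lemma box1 (lo hi : int) (M : nat) (f : int -> int) :
  - (M%:Z) <= lo -> lo <= hi -> hi <= M%:Z ->
  (forall x, x < lo -> f x = 0) -> (forall x, hi < x -> f x = 0) ->
  \sum_(a < (2*M).+1) f (a%:Z - M%:Z) = \sum_(a < (absz (hi - lo)).+1) f (lo + a%:Z).
Proof.
move=> h1 h2 h3 flo fhi.
set L := absz (lo + M%:Z); set K := absz (hi - lo).
have hL : lo + M%:Z = L%:Z by rewrite /L; lia.
have hK : hi - lo = K%:Z by rewrite /K; lia.
have t1 : (L <= L + K.+1)%N by lia.
have t2 : (L + K.+1 <= (2*M).+1)%N by lia.
rewrite -(big_mkord xpredT (fun a : nat => f (a%:Z - M%:Z))) (@big_cat_nat _ _ _ L 0 _ _ _ (leq0n L) (leq_trans t1 t2)) /=.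
rewrite (@big_cat_nat _ _ _ (L + K.+1) L _ _ _ t1 t2) /=.
have Z1 : \sum_(0 <= i < L) f (i%:Z - M%:Z) = 0.
  rewrite big_nat_cond big1 // => a /andP[/andP[_ ha] _]; apply: flo; lia.
have Z2 : \sum_(L + K.+1 <= i < (2*M).+1) f (i%:Z - M%:Z) = 0.
  rewrite big_nat_cond big1 // => a /andP[/andP[ha _] _]; apply: fhi; lia.
rewrite Z1 Z2 add0r addr0 -{1}(add0n L) big_addn.
have -> : (L + K.+1 - L = K.+1)%N by lia.
rewrite big_mkord; apply: eq_bigr => a _; congr f; lia.
Qed.

Lemma binz_nat (p q : nat) : binz p%:Z q%:Z = ('C(p,q))%:Z.
Proof.
rewrite /binz /=; case: (leqP q p) => h; first by rewrite lez_nat h.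
by rewrite lez_nat leqNgt h bin_small.
Qed.

Lemma binz_neg (p q : int) : q < 0 -> binz p q = 0.
Proof. by rewrite /binz => h; rewrite leNgt h. Qed.

Lemma binz_big (p q : int) : p < q -> binz p q = 0.
Proof. by rewrite /binz => h; rewrite (leNgt q p) h andbF. Qed.

Theorem mainTheorem2 (i N n : int) :
  0 <= i -> i <= N -> N <= n ->
  exists M0 : nat, forall M : nat, (M0 <= M)%N ->
    boxsum M (termz n N i) = (-1) ^+ absz (N - i).
Proof.
move=> hi hiN hNn; exists (absz N) => M hM.
have hM1 : - M%:Z <= i by lia.
have hM2 : N <= M%:Z by lia.
set K := absz (N - i); set m := absz (n - i).
rewrite /boxsum.
have inner : forall a : 'I_(2*M).+1,
  \sum_(b < (2 * M).+1) termz n N i (a%:Z - M%:Z) (b%:Z - M%:Z)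
  = \sum_(b < K.+1) termz n N i (a%:Z - M%:Z) (i + b%:Z).
  move=> a; apply: (@box1 i N M (fun x => termz n N i (a%:Z - M%:Z) x)) => // x hx.
    by rewrite /termz [binz _ (x - i)]binz_neg ?mulr0 ?mul0r //; lia.
  by rewrite /termz [binz (n - x) _]binz_neg ?mulr0 ?mul0r //; lia.
under eq_bigr => a _ do rewrite inner.
rewrite (@box1 i N M (fun x => \sum_(b < K.+1) termz n N i x (i + b%:Z))) //; first last.
- move=> x hx; apply: big1 => b _.
  by rewrite /termz [binz (N - i) _]binz_big ?mulr0 ?mul0r //; lia.
- move=> x hx; apply: big1 => b _.
  by rewrite /termz [binz (N - i) _]binz_neg ?mulr0 ?mul0r //; lia.
have hKm : (K <= m)%N by lia.
have T : forall a b : 'I_K.+1, termz n N i (i + a%:Z) (i + b%:Z) =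
   ('C(m - b, K - b))%:Z * ('C(m - a, b))%:Z * ('C(K, a))%:Z * (-1)^+(a+b).
  move=> a b; have ha := ltn_ord a; have hb := ltn_ord b.
  rewrite /termz.
  have -> : n - (i + b%:Z) = (m - b)%N%:Z by lia.
  have -> : N - (i + b%:Z) = (K - b)%N%:Z by lia.
  have -> : n - (i + a%:Z) = (m - a)%N%:Z by lia.
  have -> : i + b%:Z - i = b%:Z by lia.
  have -> : N - i = K%:Z by lia.
  have -> : i + a%:Z - i = a%:Z by lia.
  have -> : absz (i + a%:Z + (i + b%:Z)) = (a + b + 2 * absz i)%N by lia.
  by rewrite !binz_nat exprD exprM (_ : (-1) ^+ 2 = 1 :> int) ?expr1n ?mulr1 //; ring.
under eq_bigr => a _ do under eq_bigr => b _ do rewrite T.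
rewrite exchange_big /=.
have S : forall b : 'I_K.+1,
  \sum_(a < K.+1) ('C(m - b, K - b))%:Z * ('C(m - a, b))%:Z * ('C(K, a))%:Z * (-1)^+(a+b)
  = ('C(m - b, K - b))%:Z * (-1)^+b * (if (K <= b)%N then ('C(m-K,b-K))%:Z else 0).
  move=> b; rewrite -fK // mulr_sumr; apply: eq_bigr => a _; rewrite exprD; ring.
under eq_bigr => b _ do rewrite S.
rewrite big_ord_recr /= leqnn subnn !bin0 big1 ?add0r; first by rewrite mul1r mulr1.
move=> b _; have hb := ltn_ord b; rewrite leqNgt hb /=; by rewrite mulr0.
Qed.
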